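(* Let $R$ be a commutative ring and $S$ a finite multiplicative subset of $R$. Then an $R$-module $M$ is $u$-$S$-finitely presented if and only if $M_S$ is a finitely presented $R_S$-module.
   Context: A multiplicative subset $S$ contains $1$ and is closed under products; $M_S$, $R_S$ denote localizations at $S$. An $R$-module $M$ is $u$-$S$-finitely presented if there are $s\in S$ and an exact sequence $0\to T_1\to F\to M\to T_2\to 0$ with $F$ finitely presented and $sT_1=sT_2=0$. *)

(* Defs.v *)
From HB Require Import structures.
From mathcomp Require Import all_boot all_order all_algebra.
Set Implicit Arguments. Unset Strict Implicit. Unset Printing Implicit Defensive.
Import GRing.Theory.
Local Open Scope ring_scope.

Definition multiplicative (R : comPzRingType) (S : R -> Prop) : Prop :=
  S 1 /\ (forall a b, S a -> S b -> S (a * b)).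

Definition finite_subset (R : comPzRingType) (S : R -> Prop) : Prop :=
  exists l : seq R, forall x, S x -> x \in l.

(* A finitely presented A-module: a cokernel of a map A^m -> A^n, i.e.
   there is a linear surjection f : A^n -> N whose kernel is the image of
   A^m under right multiplication by a matrix P (so finitely generated). *)
Definition fin_presented (A : comPzRingType) (N : lmodType A) : Prop :=
  exists (n m : nat) (P : 'M[A]_(m, n)) (f : {linear 'rV[A]_n -> N}),
    (forall y : N, exists u, f u = y) /\
    (forall u : 'rV[A]_n, f u = 0 <-> exists v : 'rV[A]_m, u = v *m P).

(* u-S-finitely presented: there are s in S and an exact sequence
   0 -> T1 -> F -> M -> T2 -> 0 with F finitely presented and s T1 = s T2 = 0;
   here T1 = ker f and T2 = coker f. *)
Definition uS_fin_presented (R : comPzRingType) (S : R -> Prop) (M : lmodType R)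
  : Prop :=
  exists s : R, S s /\
  exists (F : lmodType R) (f : {linear F -> M}), fin_presented F /\
    (forall x : F, f x = 0 -> s *: x = 0) /\
    (forall m : M, exists x : F, f x = s *: m).

Definition is_ring_localization (R : comPzRingType) (S : R -> Prop)
  (RS : comPzRingType) (phi : {rmorphism R -> RS}) : Prop :=
  [/\ (forall s, S s -> exists u, phi s * u = 1),
      (forall y : RS, exists r s, S s /\ phi s * y = phi r) &
      (forall r, phi r = 0 <-> exists t, S t /\ t * r = 0)].

Definition is_module_localization (R : comPzRingType) (S : R -> Prop)
  (RS : comPzRingType) (phi : {rmorphism R -> RS})
  (M : lmodType R) (L : lmodType RS) (g : M -> L) : Prop :=
  [/\ (forall x y, g (x + y) = g x + g y),
      (forall (r : R) x, g (r *: x) = phi r *: g x),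
      (forall y : L, exists m s, S s /\ phi s *: y = g m) &
      (forall m, g m = 0 <-> exists t, S t /\ t *: m = 0)].

(* Main.v *)
Require Import Defs.
From HB Require Import structures.
From mathcomp Require Import all_boot all_order all_algebra.
From Stdlib Require Import Classical.
Local Open Scope ring_scope.

Module Helpers.
Import GRing.Theory.
Lemma pigeon (T : eqType) (f : nat -> T) (l : seq T) :
  (forall k, f k \in l) -> exists i j, (i < j)%N /\ f i = f j.
Proof.
move=> Hl; apply: NNPP => H.
have U : uniq (map f (iota 0 (size l).+1)).
  rewrite map_inj_in_uniq ?iota_uniq // => x y _ _ E.
  case: (ltngtP x y) => // [lt|lt]; exfalso; apply: H.
  - by exists x, y.
  - by exists y, x.
have : (size (map f (iota 0 (size l).+1)) <= size l)%N.
  by apply: (uniq_leq_size U) => x /mapP [k _ ->]; exact: Hl.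
by rewrite size_map size_iota ltnn.
Qed.

Lemma exists_div (R : comPzRingType) (S : R -> Prop) : Defs.multiplicative S ->
  forall l : seq R, exists s, S s /\ forall t, S t -> t \in l -> exists u, s = t * u.
Proof.
case=> S1 SM; elim=> [|a l [s [Ss Hs]]]; first by exists 1; split.
case: (classic (S a)) => Sa.
- exists (s * a); split; first exact: SM.
  move=> t St; rewrite in_cons => /orP [/eqP ->|tl]; first by exists s; rewrite mulrC.
  by case: (Hs t St tl) => u ->; exists (u * a); rewrite mulrA.
- exists s; split => // t St; rewrite in_cons => /orP [/eqP E|tl]; last exact: Hs.
  by subst t.
Qed.

Lemma exists_idem (R : comPzRingType) (S : R -> Prop) : Defs.multiplicative S ->
  finite_subset S -> exists e, [/\ S e, e * e = e & forall t, S t -> exists u, e = t * u].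
Proof.
move=> hS [l Hl]; have [s [Ss Hs]] := @exists_div _ _ hS l.
case: hS => S1 SM.
have Sp : forall k, S (s ^+ k) by elim=> [|k IH]; rewrite ?expr0 // exprS; exact: SM.
have [i [j [lt E]]] := @pigeon _ (fun k => s ^+ k) l (fun k => Hl _ (Sp k)).
set p := (j - i)%N.
have jE : j = (i + p)%N by rewrite /p subnKC // ltnW.
have H1 : forall k, s ^+ (i + k * p) = s ^+ i.
  elim=> [|k IH]; first by rewrite mul0n addn0.
  by rewrite mulSn addnCA exprD IH -exprD addnC -jE -E.
have H2 : forall a k, (i <= a)%N -> s ^+ (a + k * p) = s ^+ a.
  by move=> a k ia; rewrite -(subnKC ia) -addnA (addnC (a - i)%N) addnA exprD H1 -exprD.
have pp : (0 < p)%N by rewrite subn_gt0.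
exists (s ^+ (i.+1 * p)); split => //.
- rewrite -exprD H2 //; rewrite mulSn; apply: leq_trans (leq_addl _ _); exact: leq_pmulr.
- move=> t St; have [u ->] := Hs t St (Hl _ St).
  exists (u * (t * u) ^+ (i.+1 * p).-1); rewrite mulrA -exprS prednK //.
  by rewrite muln_gt0.
Qed.
Section Restr.
Variables (R RS : comPzRingType) (phi : {rmorphism R -> RS}) (L : lmodType RS).
Definition restr (f : {rmorphism R -> RS}) : Type := L.
HB.instance Definition _ := GRing.Zmodule.on (restr phi).
Definition rscale (r : R) (x : restr phi) : restr phi := (phi r *: (x : L)).
Fact rscaleA a b v : rscale a (rscale b v) = rscale (a * b) v.
Proof. by rewrite /rscale scalerA rmorphM. Qed.
Fact rscale1 : left_id 1 rscale.
Proof. by move=> v; rewrite /rscale rmorph1 scale1r. Qed.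
Fact rscaleDr : right_distributive rscale +%R.
Proof. by move=> a u v; rewrite /rscale scalerDr. Qed.
Fact rscaleDl v : {morph rscale^~ v: a b / a + b}.
Proof. by move=> a b; rewrite /rscale rmorphD scalerDl. Qed.
HB.instance Definition _ := GRing.Zmodule_isLmodule.Build R (restr phi) rscaleA rscale1 rscaleDr rscaleDl.
End Restr.
Arguments restr {R RS} L f.
Arguments rscale {R RS} phi L r x.

Section Combo.
Variables (A : comPzRingType) (N : lmodType A) (n : nat) (w : 'I_n -> N).
Definition combo (u : 'rV[A]_n) : N := \sum_i u 0 i *: w i.
Fact combo_lin : linear combo.
Proof.
move=> a u v; rewrite /combo scaler_sumr -big_split /=; apply: eq_bigr => i _.
by rewrite !mxE scalerDl scalerA.
Qed.
HB.instance Definition _ := GRing.isLinear.Build A 'rV[A]_n N *:%R combo combo_lin.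
End Combo.
Arguments combo {A N n} w u.

Section FM.
Variables (R RS : comPzRingType) (phi : {rmorphism R -> RS}) (M : lmodType R)
  (L : lmodType RS) (g : M -> L) (e : R).
Hypotheses (gD : forall x y, g (x + y) = g x + g y)
  (gZ : forall r x, g (r *: x) = phi r *: g x)
  (gs : forall y, exists m, g m == y)
  (gk : forall m1 m2, g m1 = g m2 -> e *: m1 = e *: m2).
Definition fm (y : restr L phi) : M := let _ := (gD, gZ, gk) in e *: xchoose (gs y).
Lemma fmP {y m} : g m = y -> fm y = e *: m.
Proof. by move=> gm; rewrite /fm; apply: gk; rewrite gm; apply/eqP/(xchooseP (gs y)). Qed.
Fact fm_lin : linear fm.
Proof.
move=> a y z.
have [my /eqP hy] := gs y; have [mz /eqP hz] := gs z.
rewrite (fmP hy) (fmP hz) (@fmP _ (a *: my + mz)); last by rewrite gD gZ hy hz.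
by rewrite scalerDr !scalerA mulrC.
Qed.
HB.instance Definition _ := GRing.isLinear.Build R (restr L phi) M *:%R fm fm_lin.
End FM.
Arguments fm {R RS phi M L g e} gD gZ gs gk y.
Arguments fmP {R RS phi M L g e} gD gZ gs gk {y m}.

Section Lift.
Variables (R RS : comPzRingType) (phi : {rmorphism R -> RS}) (L : lmodType RS) (n : nat)
  (f' : {linear 'rV[RS]_n -> L}).
Definition liftlin (u : 'rV[R]_n) : restr L phi := f' (map_mx phi u).
Fact liftlin_lin : linear liftlin.
Proof. by move=> a u v; rewrite /liftlin map_mxD map_mxZ linearP. Qed.
HB.instance Definition _ := GRing.isLinear.Build R 'rV[R]_n (restr L phi) *:%R liftlin liftlin_lin.
End Lift.
Arguments liftlin {R RS} phi {L n} f' u.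

End Helpers.
Import Helpers.

Theorem proposition2p4 (R : comPzRingType) (S : R -> Prop)
  (hS : multiplicative S) (hfin : finite_subset S)
  (M : lmodType R)
  (RS : comPzRingType) (phi : {rmorphism R -> RS})
  (hRS : is_ring_localization S phi)
  (L : lmodType RS) (g : M -> L) (hL : is_module_localization S phi g) :
  uS_fin_presented S M <-> fin_presented L.
Proof.
Import GRing.Theory.
have [e [Se ee ediv]] := @Helpers.exists_idem _ _ hS hfin.
case: hRS => unitS locRS kerRS.
case: hL => gD gZ locL kerL.
have phie : phi e = 1.
  have [u hu] := unitS e Se.
  by rewrite -[LHS]mulr1 -hu mulrA -rmorphM ee.
have phis : forall y, exists r, phi r = y.
  move=> y; have [r [s [Ss hy]]] := locRS y; have [u eu] := ediv s Ss.
  by exists (u * r); rewrite rmorphM -hy mulrA -rmorphM (mulrC u s) -eu phie mul1r.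
have phi0 : forall r, phi r = 0 <-> e * r = 0.
  move=> r; split.
  - by case/kerRS => t [St tr]; have [u eu] := ediv t St; rewrite eu mulrAC tr mul0r.
  - by move=> er; rewrite -[phi r]mul1r -phie -rmorphM er rmorph0.
have g0 : g 0 = 0 by have := gZ 0 0; rewrite scale0r rmorph0 scale0r.
have gN : forall x, g (- x) = - g x.
  by move=> x; rewrite -scaleN1r gZ rmorphN1 scaleN1r.
have gB : forall x y, g (x - y) = g x - g y by move=> x y; rewrite gD gN.
have gsum : forall n (F : 'I_n -> M), g (\sum_i F i) = \sum_i g (F i).
  by move=> n F; apply: (big_morph g gD g0).
have gsurj : forall y, exists m, g m = y.
  move=> y; have [m [s [Ss hy]]] := locL y; have [u eu] := ediv s Ss.
  by exists (u *: m); rewrite gZ -hy scalerA -rmorphM (mulrC u s) -eu phie scale1r.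
have gker : forall m, g m = 0 <-> e *: m = 0.
  move=> m; split.
  - by case/kerL => t [St tm]; have [u eu] := ediv t St; rewrite eu mulrC -scalerA tm scaler0.
  - by move=> em; rewrite -[g m]scale1r -phie -gZ em g0.
have gk : forall m1 m2, g m1 = g m2 -> e *: m1 = e *: m2.
  by move=> m1 m2 E; apply/eqP; rewrite -subr_eq0 -scalerBr; apply/eqP/gker; rewrite gB E subrr.
have gs' : forall y, exists m, g m == y by move=> y; have [m hm] := gsurj y; exists m; apply/eqP.
have phis' : forall y, exists r, phi r == y by move=> y; have [r hr] := phis y; exists r; apply/eqP.
have lift : forall p q (A' : 'M[RS]_(p, q)), exists A, map_mx phi A = A'.
  move=> p q A'; exists (\matrix_(i, j) xchoose (phis' (A' i j))).
  by apply/matrixP => i j; rewrite !mxE; apply/eqP/(xchooseP (phis' _)).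
split.
- case=> s [Ss [F [f [[n [m [P [h [hsurj hker]]]]] [fker fim]]]]].
  have [u0 eu0] := ediv s Ss.
  have fker' : forall x, f x = 0 -> e *: x = 0.
    by move=> x /fker sx; rewrite eu0 mulrC -scalerA sx scaler0.
  have fim' : forall y, exists x, f x = e *: y.
    by move=> y; have [x hx] := fim (u0 *: y); exists x; rewrite hx scalerA eu0.
  pose w := fun i : 'I_n => g (f (h (delta_mx 0 i))).
  have key : forall u : 'rV[R]_n, Helpers.combo w (map_mx phi u) = g (f (h u)).
    move=> u; rewrite {2}(row_sum_delta u) !linear_sum gsum /Helpers.combo.
    by apply: eq_bigr => i _; rewrite mxE !linearZ /= gZ.
  exists n, m, (map_mx phi P), (GRing.Linear.clone _ _ _ _ (Helpers.combo w) _); split.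
  + move=> y; have [m0 <-] := gsurj y; have [x hx] := fim' m0; have [u hu] := hsurj x.
    by exists (map_mx phi u); rewrite /= key hu hx gZ phie scale1r.
  + move=> u'; have [u <-] := lift _ _ u'; split.
    * rewrite /= key => /gker; rewrite -!linearZ => /fker'; rewrite -linearZ scalerA ee.
      case/hker => v hv; exists (map_mx phi v).
      by rewrite -map_mxM -hv map_mxZ phie scale1r.
    * case=> v' hv; have [v hvv] := lift _ _ v'; rewrite /= hv -hvv -map_mxM key.
      have := (hker (v *m P)).2; rewrite -/(v *m P) => ->; last by exists v.
      by rewrite linear0 g0.
- case=> n [m [P' [f' [fsurj fker]]]].
  exists e; split => //.
  exists (Helpers.restr L phi), (GRing.Linear.clone _ _ _ _ (Helpers.fm gD gZ gs' gk) _); split.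
  + have [P0 hP0] := lift _ _ P'.
    exists n, (m + n)%N, (col_mx P0 ((1 - e)%:M)), (GRing.Linear.clone _ _ _ _ (Helpers.liftlin phi f') _); split.
    * move=> y; have [u' hu] := fsurj y; have [u hu'] := lift _ _ u'.
      by exists u; rewrite /= /Helpers.liftlin hu' hu.
    * move=> u; rewrite /= /Helpers.liftlin; split.
      - case/fker => v' hv; have [v1 hv1] := lift _ _ v'.
        rewrite -hv1 -hP0 -map_mxM in hv.
        have hz : e *: (u - v1 *m P0) = 0.
          apply/matrixP => i j; have := congr1 (fun A : 'M[RS]_(1, n) => A i j) hv; rewrite !mxE => hij.
          by apply/phi0; rewrite rmorphB hij subrr.
        exists (row_mx v1 (u - v1 *m P0)).
        by rewrite mul_row_col mul_mx_scalar scalerBl scale1r hz subr0 addrC subrK.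
      - case=> v ->; rewrite -[v]hsubmxK mul_row_col mul_mx_scalar; apply/fker.
        exists (map_mx phi (lsubmx v)).
        by rewrite map_mxD map_mxZ rmorphB rmorph1 phie subrr scale0r addr0 map_mxM hP0.
  + split.
    * move=> x /= hx; change (phi e *: (x : L) = 0); rewrite phie scale1r.
      have [m0 hm] := gsurj x; rewrite (Helpers.fmP gD gZ gs' gk hm) in hx.
      by rewrite -hm; apply/gker.
    * by move=> m0; exists (g m0); apply: Helpers.fmP.
Qed.
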